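(* Let $n,g,k,t,u$ be positive integers. If there exist a large set of H-designs LH$(n,g,k,t)$ and an orthogonal array OA$(t,k,u)$, then there exists a large set of H-designs LH$(n,gu,k,t)$.
   Context: An H-design H$(n,g,k,t)$ is a triple $(Q,G,B)$ where $Q$ is a set of $ng$ points, $G$ is a partition of $Q$ into $n$ groups of size $g$, and $B$ is a set of $k$-subsets of $Q$ (blocks) such that each block meets each group in at most one point and any $t$ points from $t$ distinct groups lie in exactly one block. A large set of H-designs LH$(n,g,k,t)$ is a partition of the set of all $k$-subsets of $Q$ meeting each group of $G$ in at most one point into pairwise disjoint block sets, each of which forms (with $Q$ and $G$) an H-design H$(n,g,k,t)$. An orthogonal array OA$(t,k,u)$ is a $u^t\times k$ matrix with entries from $\mathbb{Z}_u$ such that in the submatrix formed by any $t$ columns each ordered $t$-tuple over $\mathbb{Z}_u$ occurs exactly once as a row. *)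

(* Defs.v *)
From mathcomp Require Import all_boot all_order all_algebra.
Set Implicit Arguments. Unset Strict Implicit. Unset Printing Implicit Defensive.

(* Canonical model of (Q, G): Q = 'I_n * 'I_g (ng points), and the group of
   a point x is its first coordinate x.1, so G has n groups of size g. *)
Definition hpoint (n g : nat) := ('I_n * 'I_g)%type.

Definition transverse (n g : nat) (S : {set hpoint n g}) : bool :=
  [forall x in S, forall y in S, (x.1 == y.1) ==> (x == y)].

Definition transverse_ksets (n g k : nat) : {set {set hpoint n g}} :=
  [set S | transverse S & #|S| == k].

Definition H_design (n g k t : nat) (B : {set {set hpoint n g}}) : Prop :=
  (forall b, b \in B -> (#|b| == k) && transverse b) /\
  (forall T : {set hpoint n g}, transverse T -> #|T| = t ->
     #|[set b in B | T \subset b]| = 1).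

Definition large_set_H (n g k t : nat) (L : {set {set {set hpoint n g}}}) : Prop :=
  partition L (transverse_ksets n g k) /\
  (forall B, B \in L -> H_design k t B).

Definition exists_LH (n g k t : nat) : Prop :=
  exists L : {set {set {set hpoint n g}}}, large_set_H k t L.

Definition OA (t k u : nat) (A : 'M['I_u]_(u ^ t, k)) : Prop :=
  forall (c : {ffun 'I_t -> 'I_k}) (v : {ffun 'I_t -> 'I_u}),
    injectiveb c ->
    #|[set r : 'I_(u ^ t) | [forall i, A r (c i) == v i]]| = 1.

Definition exists_OA (t k u : nat) : Prop :=
  exists A : 'M['I_u]_(u ^ t, k), OA A.

(* Main.v *)
Require Import Defs.
From mathcomp Require Import all_boot all_order all_algebra.
Set Implicit Arguments. Unset Strict Implicit. Unset Printing Implicit Defensive.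
Import GRing.Theory.

Section Enc.
Variables g u : nat.
Lemma cardGU : #|{: 'I_g * 'I_u}| = g * u.
Proof. by rewrite card_prod !card_ord. Qed.
Definition enc (a : 'I_g) (s : 'I_u) : 'I_(g * u) := cast_ord cardGU (enum_rank (a, s)).
Definition dec (c : 'I_(g * u)) : 'I_g * 'I_u := enum_val (cast_ord (esym cardGU) c).
Lemma decK a s : dec (enc a s) = (a, s).
Proof. by rewrite /dec /enc cast_ordK enum_rankK. Qed.
Lemma encK c : enc (dec c).1 (dec c).2 = c.
Proof. by rewrite /dec /enc -surjective_pairing enum_valK cast_ordKV. Qed.
End Enc.

Definition grp (n : nat) (Y : finType) (S : {set 'I_n * Y}) : {set 'I_n} := [set p.1 | p in S].

Section Card.
Variables (n : nat) (Y : finType).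
Definition trv (S : {set 'I_n * Y}) := [forall x in S, forall y in S, (x.1 == y.1) ==> (x == y)].
Lemma trvP (S : {set 'I_n * Y}) : reflect {in S &, forall x y, x.1 = y.1 -> x = y} (trv S).
Proof.
apply: (iffP forallP) => [H x y xS yS e|H x]; last first.
  apply/implyP => xS; apply/forallP => y; apply/implyP => yS; apply/implyP => /eqP e.
  by rewrite (H x y xS yS e).
by move: (H x); rewrite xS => /forall_inP /(_ y yS) /implyP; rewrite e eqxx => /(_ isT) /eqP.
Qed.
Lemma card_grp (S : {set 'I_n * Y}) : trv S -> #|grp S| = #|S|.
Proof. by move/trvP => H; rewrite card_in_imset. Qed.
Lemma trv_le (S : {set 'I_n * Y}) : trv S -> #|S| <= n.
Proof. by move=> H; rewrite -card_grp //; apply: leq_trans (max_card _) _; rewrite card_ord. Qed.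
Lemma trv_sub (S T : {set 'I_n * Y}) : S \subset T -> trv T -> trv S.
Proof. move=> /subsetP sST /trvP H; apply/trvP => x y xS yS; apply: H; exact: sST. Qed.
End Card.

Lemma transverseE n g (S : {set hpoint n g}) : transverse S = trv S.
Proof. by []. Qed.

Section Col.
Variables n k : nat.
Variable k0 : 'I_k.
Implicit Types (G : {set 'I_n}) (i j : 'I_n).
Definition rk (G : {set 'I_n}) (i : 'I_n) : nat := #|[set j in G | j < i]|.
Definition colx G i : 'I_k := insubd k0 (rk G i).

Lemma rk_lt G i : i \in G -> rk G i < #|G|.
Proof.
move=> iG; apply: proper_card; apply/properP; split.
  by apply/subsetP => j; rewrite inE => /andP[].
by exists i => //; rewrite inE ltnn andbF.
Qed.

Lemma rk_mono G i j : i \in G -> i < j -> rk G i < rk G j.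
Proof.
move=> iG ij; apply: proper_card; apply/properP; split.
  apply/subsetP => x; rewrite !inE => /andP[-> xi] /=; exact: ltn_trans ij.
by exists i; rewrite !inE ?iG ?ij // ltnn andbF.
Qed.

Lemma rk_inj G : {in G &, injective (rk G)}.
Proof.
move=> i j iG jG e; apply/val_inj => /=.
case: (ltngtP i j) => // h.
  by have := rk_mono iG h; rewrite e ltnn.
by have := rk_mono jG h; rewrite e ltnn.
Qed.

Lemma colxE G i : #|G| = k -> i \in G -> val (colx G i) = rk G i.
Proof. by move=> cG iG; rewrite /colx insubdK // -topredE /= -cG rk_lt. Qed.

Lemma colx_inj G : #|G| = k -> {in G &, injective (colx G)}.
Proof.
move=> cG i j iG jG e; apply: (rk_inj iG jG).
by rewrite -(colxE cG iG) -(colxE cG jG) e.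
Qed.

Lemma colx_surj G : #|G| = k -> forall j : 'I_k, exists2 i, i \in G & colx G i = j.
Proof.
move=> cG j.
have: [set colx G i | i in G] = setT.
  apply/eqP; rewrite eqEcard subsetT cardsT card_ord card_in_imset ?cG //.
  by rewrite leqnn.
  exact: (colx_inj cG).
move=> /setP /(_ j); rewrite inE => /imsetP[i iG ->]; by exists i.
Qed.
End Col.

Section Main.
Variables (n g u' k t : nat) (k0 : 'I_k) (tk : t <= k).
Local Notation u := u'.+1.
Local Notation P := (hpoint n g).
Local Notation Q := (hpoint n (g * u)).
Variable A : 'M['I_u]_(u ^ t, k).
Hypothesis HA : OA A.
Variable L : {set {set {set P}}}.
Hypothesis HL : large_set_H k t L.
Implicit Types (S T : {set Q}) (b : {set P}) (p : P) (q : Q) (B : {set {set P}}) (X : {set {set Q}}) (w : {ffun 'I_k -> 'I_u}).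

Definition pj (q : Q) : P := (q.1, (dec q.2).1).
Definition sy (q : Q) : 'I_u := (dec q.2).2.
Definition mk (p : P) (s : 'I_u) : Q := (p.1, enc p.2 s).
Lemma pjmk p s : pj (mk p s) = p.
Proof. by case: p => a b; rewrite /pj /mk /= decK. Qed.
Lemma symk p s : sy (mk p s) = s.
Proof. by rewrite /sy /mk /= decK. Qed.
Lemma mkK q : mk (pj q) (sy q) = q.
Proof. by case: q => a c; rewrite /mk /pj /sy /= encK. Qed.

Definition lft (b : {set P}) (z : {ffun 'I_k -> 'I_u}) : {set Q} :=
  [set mk p (z (colx k0 (grp b) p.1)) | p in b].

Lemma mem_lft b z q :
  (q \in lft b z) = (pj q \in b) && (z (colx k0 (grp b) q.1) == sy q).
Proof.
apply/imsetP/andP => [[p pb ->]|[pb /eqP e]].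
  by rewrite pjmk symk pb.
by exists (pj q) => //=; rewrite e mkK.
Qed.

Lemma grp_lft b z : grp (lft b z) = grp b.
Proof.
apply/setP => i; apply/imsetP/imsetP => [[q /imsetP[p pb ->] ->]|[p pb ->]].
  by exists p.
by exists (mk p (z (colx k0 (grp b) p.1))) => //; apply/imsetP; exists p.
Qed.

Lemma pj_lft b z : pj @: lft b z = b.
Proof.
apply/setP => p; apply/imsetP/idP => [[q]|pb].
  by rewrite mem_lft => /andP[pb _] ->.
exists (mk p (z (colx k0 (grp b) p.1))); last by rewrite pjmk.
by apply/imsetP; exists p.
Qed.

Lemma lft_trv b z : trv b -> trv (lft b z).
Proof.
move=> /trvP H; apply/trvP => x y /imsetP[p pb ->] /imsetP[p' pb' ->] /= e.
by rewrite (H p p' pb pb' e).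
Qed.

Lemma card_lft b z : #|lft b z| = #|b|.
Proof.
rewrite card_in_imset // => p p' _ _ e.
by rewrite -(pjmk p (z (colx k0 (grp b) p.1))) e pjmk.
Qed.

Lemma lft_inj b z z' : #|grp b| = k -> lft b z = lft b z' -> z = z'.
Proof.
move=> cb e; apply/ffunP => j.
have [i ib cj] := colx_surj k0 cb j.
case/imsetP: ib => p pb ip.
have : mk p (z j) \in lft b z.
  by rewrite mem_lft pjmk symk pb /= -ip cj.
by rewrite e mem_lft symk /= -ip cj => /andP[_ /eqP].
Qed.

Lemma pj_inj S : trv S -> {in S &, injective pj}.
Proof. by move=> /trvP H x y xS yS e; apply: H => //; rewrite -[x.1]/((pj x).1) e. Qed.

Lemma pj_trv S : trv S -> trv (pj @: S).
Proof.
move=> tS; apply/trvP => x y /imsetP[x' x'S ->] /imsetP[y' y'S ->] /= e.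
by move/trvP: tS => H; rewrite (H x' y' x'S y'S e).
Qed.

Lemma card_pj S : trv S -> #|pj @: S| = #|S|.
Proof. by move=> tS; rewrite card_in_imset //; apply: pj_inj. Qed.

Lemma grp_pj S : grp (pj @: S) = grp S.
Proof. by rewrite /grp -imset_comp. Qed.

Lemma decomp_S S : trv S -> #|S| = k -> exists z, S = lft (pj @: S) z.
Proof.
move=> tS cS.
have cG : #|grp S| = k by rewrite card_grp.
pose z := [ffun j => if [pick q in S | colx k0 (grp S) q.1 == j] is Some q then sy q else 0%R].
have key : forall q, q \in S -> z (colx k0 (grp S) q.1) = sy q.
  move=> q qS; rewrite ffunE; case: pickP => [q' /andP[q'S /eqP e]|H].
    have e1 : q'.1 = q.1.
      by apply: (colx_inj cG) e; apply/imsetP; [exists q'|exists q].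
    by move/trvP: tS => H; rewrite (H q' q q'S qS e1).
  by have := H q; rewrite qS eqxx.
exists z; apply/setP => q; rewrite mem_lft grp_pj.
apply/idP/andP => [qS|[/imsetP[q' q'S e] /eqP e2]].
  by rewrite key // eqxx; split => //; apply/imsetP; exists q.
have e1 : q.1 = q'.1 by rewrite -[q.1]/((pj q).1) e.
rewrite e1 key // in e2.
by rewrite -(mkK q) -e2 e mkK.
Qed.

Definition Wset : {set {ffun 'I_k -> 'I_u}} :=
  [set w : {ffun 'I_k -> 'I_u} | [forall j : 'I_k, (j < t) ==> (w j == 0%R)]].
Definition zz (r : 'I_(u ^ t)) (w : {ffun 'I_k -> 'I_u}) : {ffun 'I_k -> 'I_u} :=
  [ffun j => (A r j + w j)%R].
Definition c0 : {ffun 'I_t -> 'I_k} := [ffun i => widen_ord tk i].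
Lemma c0_inj : injectiveb c0.
Proof. by apply/injectiveP => i j; rewrite !ffunE => /(congr1 val) /= /val_inj. Qed.

Lemma OA1 (c : {ffun 'I_t -> 'I_k}) (v : {ffun 'I_t -> 'I_u}) : injectiveb c ->
  exists r, forall r', (forall i, A r' (c i) = v i) <-> r' = r.
Proof.
move=> ic; have /eqP/cards1P[r Hr] := HA v ic.
exists r => r'; move/setP: Hr => /(_ r'); rewrite !inE => E.
split => [H|e].
  by apply/eqP; rewrite -E; apply/forallP => i; rewrite H.
by move=> i; move: E; rewrite e eqxx => /forallP/(_ i)/eqP.
Qed.

Lemma decomp_z x : exists r, exists2 w, w \in Wset & x = zz r w.
Proof.
have [r Hr] := OA1 [ffun i => x (c0 i)] c0_inj.
have Hr2 : forall i, A r (c0 i) = x (c0 i) by move=> i; rewrite (proj2 (Hr r) erefl) ffunE.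
exists r; exists [ffun j => (x j - A r j)%R].
  rewrite inE; apply/forallP => j; apply/implyP => jt; rewrite ffunE.
  have -> : j = c0 (Ordinal jt) by apply/val_inj; rewrite ffunE.
  by rewrite Hr2 subrr.
by apply/ffunP => j; rewrite !ffunE addrC subrK.
Qed.

Lemma zz_inj r w r' w' : w \in Wset -> w' \in Wset -> zz r w = zz r' w' -> w = w'.
Proof.
rewrite !inE => /forallP Hw /forallP Hw' e.
have e0 : forall j : 'I_k, (A r j + w j = A r' j + w' j)%R.
  by move=> j; move/ffunP: e => /(_ j); rewrite /zz !ffunE.
have rr : r' = r.
  have [r0 Hr0] := OA1 [ffun i => A r (c0 i)] c0_inj.
  have e1 : r = r0.
    apply: (proj1 (Hr0 r)) => i. by rewrite !ffunE.
  rewrite e1.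
  apply: (proj1 (Hr0 r')) => i; rewrite [RHS]ffunE.
  have ct : c0 i < t by rewrite ffunE /=.
  have := e0 (c0 i); move: (Hw (c0 i)) (Hw' (c0 i)); rewrite ct /= => /eqP -> /eqP ->.
  rewrite !addr0 => ->. done.
apply/ffunP => j; have := e0 j; rewrite rr; exact: addrI.
Qed.

Lemma HLcov : cover L = transverse_ksets n g k.
Proof. by case: HL => /and3P[/eqP ? _ _]. Qed.

Lemma blockL B b : B \in L -> b \in B -> trv b /\ #|b| = k.
Proof.
move=> BL bB; have : b \in cover L by apply/bigcupP; exists B.
by rewrite HLcov inE => /andP[tb /eqP cb].
Qed.

Lemma uniqL B B' b : B \in L -> B' \in L -> b \in B -> b \in B' -> B = B'.
Proof.
move=> BL B'L bB bB'; apply/eqP; apply/negPn/negP => ne.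
case: HL => /and3P[_ /trivIsetP tr _] _.
by have := disjointFr (tr B B' BL B'L ne) bB; rewrite bB'.
Qed.

Definition Dset (B : {set {set P}}) (w : {ffun 'I_k -> 'I_u}) : {set {set Q}} :=
  [set S | [exists b in B, exists r, S == lft b (zz r w)]].
Definition Lnew : {set {set {set Q}}} :=
  [set X | [exists B in L, exists w in Wset, X == Dset B w]].

Lemma memD B w S : reflect (exists2 b, b \in B & exists r, S = lft b (zz r w)) (S \in Dset B w).
Proof.
rewrite inE; apply: (iffP existsP) => [[b /andP[bB /existsP[r /eqP e]]]|[b bB [r e]]].
  by exists b => //; exists r.
by exists b; rewrite bB; apply/existsP; exists r; rewrite e.
Qed.

Arguments memD {B w S}.
Lemma memL X : reflect (exists B, exists w, [/\ B \in L, w \in Wset & X = Dset B w]) (X \in Lnew).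
Proof.
rewrite inE; apply: (iffP existsP) => [[B /andP[BL /existsP[w /andP[wW /eqP e]]]]|[B [w [BL wW e]]]].
  by exists B, w.
exists B; rewrite BL /=; apply/existsP; exists w. by rewrite wW e eqxx.
Qed.

Arguments memL {X}.
Lemma D_design B w : B \in L -> w \in Wset -> H_design k t (Dset B w).
Proof.
move=> BL wW; split.
  move=> S /memD[b bB [r ->]]; have [tb cb] := blockL BL bB.
  by rewrite card_lft cb eqxx /=; apply: lft_trv.
move=> T tT cT.
have tT' := pj_trv tT; have cT' : #|pj @: T| = t by rewrite card_pj.
have [_ Hd] := (proj2 HL) B BL.
have /eqP/cards1P[b0 Hb0] := Hd _ tT' cT'.
have b0in : b0 \in [set b in B | pj @: T \subset b] by rewrite Hb0 set11.
move: (b0in); rewrite inE => /andP[b0B Tb0].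
have [tb0 cb0] := blockL BL b0B.
have cG : #|grp b0| = k by rewrite card_grp.
pose e (i : 'I_t) : Q := enum_val (cast_ord (esym cT) i).
have eT : forall i, e i \in T by move=> i; exact: enum_valP.
have einj : injective e by move=> i j /enum_val_inj /cast_ord_inj.
have esurj : forall q, q \in T -> exists i, e i = q.
  move=> q qT; exists (cast_ord cT (enum_rank_in qT q)).
  by rewrite /e cast_ordK enum_rankK_in.
have eG : forall i, (e i).1 \in grp b0.
  move=> i; apply/imsetP; exists (pj (e i)) => //.
  by apply: (subsetP Tb0); apply/imsetP; exists (e i).
pose c := [ffun i => colx k0 (grp b0) (e i).1].
have ci : injectiveb c.
  apply/injectiveP => i j; rewrite !ffunE => /(colx_inj cG (eG i) (eG j)) h.
  by apply: einj; move/trvP: tT => H; apply: H.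
pose v := [ffun i => (sy (e i) - w (c i))%R].
have [r0 Hr0] := OA1 v ci.
have -> : [set S in Dset B w | T \subset S] = [set lft b0 (zz r0 w)].
  apply/setP => S; rewrite in_set1 inE; apply/andP/eqP => [[/memD[b bB [r ->]] TS]|->].
    have bb0 : b = b0.
      have : b \in [set b in B | pj @: T \subset b].
        by rewrite inE bB /= -(pj_lft b (zz r w)); apply: imsetS.
      by rewrite Hb0 inE => /eqP.
    subst b; congr lft; congr zz; apply/(Hr0 r) => i.
    have := subsetP TS _ (eT i); rewrite mem_lft => /andP[_ /eqP].
    by rewrite !ffunE => <-; rewrite addrK.
  split; first by apply/memD; exists b0 => //; exists r0.
  apply/subsetP => q qT; have [i ei] := esurj q qT.
  rewrite mem_lft; apply/andP; split.
    by apply: (subsetP Tb0); apply/imsetP; exists q.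
  have := (proj2 (Hr0 r0) erefl i).
  by rewrite -ei !ffunE => ->; rewrite subrK.
by rewrite cards1.
Qed.

Lemma sameD B B' w w' S : B \in L -> B' \in L -> w \in Wset -> w' \in Wset ->
  S \in Dset B w -> S \in Dset B' w' -> Dset B w = Dset B' w'.
Proof.
move=> BL B'L wW w'W /memD[b bB [r eS]] /memD[b' bB' [r' eS']].
have bb : b = b' by rewrite -(pj_lft b (zz r w)) -eS eS' pj_lft.
subst b'.
have BB : B = B' := uniqL BL B'L bB bB'.
have [tb cb] := blockL BL bB.
have cG : #|grp b| = k by rewrite card_grp.
have := lft_inj cG (etrans (esym eS) eS') => /(zz_inj wW w'W) ->.
by rewrite BB.
Qed.

Lemma main_LH : exists_LH n (g * u) k t.
Proof.
exists Lnew; split; last first.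
  by move=> X /memL[B [w [BL wW ->]]]; apply: D_design.
apply/and3P; split.
- apply/eqP/setP => S; rewrite inE; apply/bigcupP/andP.
    move=> [X /memL[B [w [BL wW ->]]] /memD[b bB [r ->]]].
    have [tb cb] := blockL BL bB.
    by rewrite card_lft cb; split => //; apply: lft_trv.
  move=> [tS /eqP cS].
  have [z ez] := decomp_S tS cS.
  have : pj @: S \in transverse_ksets n g k.
    by rewrite inE card_pj // cS eqxx andbT; apply: pj_trv.
  rewrite -HLcov => /bigcupP[B BL bB].
  have [r [w wW ezz]] := decomp_z z.
  exists (Dset B w); first by apply/memL; exists B, w.
  by apply/memD; exists (pj @: S) => //; exists r; rewrite -ezz.
- apply/trivIsetP => X Y /memL[B [w [BL wW ->]]] /memL[B' [w' [B'L w'W ->]]] ne.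
  rewrite -setI_eq0; apply/eqP/setP => S; rewrite inE in_set0.
  apply/negbTE/negP => /andP[S1 S2].
  by move/eqP: ne; apply; apply: (sameD BL B'L wW w'W S1 S2).
- apply/negP => /memL[B [w [BL wW e]]].
  have B0 : B != set0.
    by apply/negP => /eqP B0; case: HL => /and3P[_ _]; rewrite -B0 BL.
  have [b bB] := set0Pn B B0.
  have r : 'I_(u ^ t) by exists 0; rewrite expn_gt0.
  have : lft b (zz r w) \in Dset B w by apply/memD; exists b => //; exists r.
  by rewrite -e inE.
Qed.
End Main.

Lemma mkset n g (a0 : 'I_g) m (H : m <= n) :
  exists S : {set hpoint n g}, transverse S /\ #|S| = m.
Proof.
exists [set (widen_ord H i, a0) | i : 'I_m]; split.
  apply/trvP => x y /imsetP[i _ ->] /imsetP[j _ ->] /= e.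
  by rewrite e.
rewrite card_imset ?card_ord // => i j e; apply/val_inj; exact: (congr1 (fun x => val x.1) e).
Qed.

Lemma trivial_LH n g k t : n < t -> exists_LH n g k t.
Proof.
move=> nt.
set TK := transverse_ksets n g k.
exists [set X | (X == TK) && (TK != set0)]; split.
  apply/and3P; split.
  - apply/eqP/setP => S; apply/bigcupP/idP => [[X]|ST].
      by rewrite inE => /andP[/eqP -> _].
    exists TK => //; rewrite inE eqxx /=; apply/set0Pn; by exists S.
  - apply/trivIsetP => X Y; rewrite !inE => /andP[/eqP -> _] /andP[/eqP -> _].
    by rewrite eqxx.
  - by rewrite inE; apply/negP => /andP[/eqP <-]; rewrite eqxx.
move=> B; rewrite inE => /andP[/eqP -> _]; split.
  by move=> b; rewrite inE => /andP[tb cb]; rewrite cb tb.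
move=> T tT cT; have := trv_le tT; rewrite cT => tn.
by have := leq_trans nt tn; rewrite ltnn.
Qed.

Theorem theorem4 (n g k t u : nat) :
  0 < n -> 0 < g -> 0 < k -> 0 < t -> 0 < u ->
  exists_LH n g k t -> exists_OA t k u -> exists_LH n (g * u) k t.
Proof.
move=> n0 g0 k0 t0 u0 [L HL] [A HA].
case: (leqP t k) => tk.
  case: u u0 A HA => // u' _ A HA.
  exact: (main_LH (Ordinal k0) tk HA HL).
case: (ltnP n t) => nt; first exact: trivial_LH.
exfalso.
have a0 : 'I_g := Ordinal g0.
have [Sk [tSk cSk]] := mkset a0 (ltnW (leq_trans tk nt)).
have [St [tSt cSt]] := mkset a0 nt.
have : Sk \in cover L by rewrite (HLcov HL) inE tSk cSk eqxx.
move=> /bigcupP[B BL SkB].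
have [_ Hd] := (proj2 HL) B BL.
have /eqP/cards1P[b Hb] := Hd St tSt cSt.
have : b \in [set b in B | St \subset b] by rewrite Hb set11.
rewrite inE => /andP[bB Stb].
have [_ cb] := blockL HL BL bB.
have := subset_leq_card Stb; rewrite cSt cb => kt.
by have := leq_trans tk kt; rewrite ltnn.
Qed.
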